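(* $\displaystyle\lim_{n\to\infty}V_n(E)^{1/n}=\lim_{n\to\infty}M_n(E)=0.$
   Context: $U$ is the open unit disc and $E\subset U$ is a set with infinitely many points whose set $E_0$ of nontangential limit points has Lebesgue measure zero on $\partial U$ (a point $\zeta\in\partial U$ is a nontangential limit point of $E$ if some sequence $(w_n)$ in $E$ satisfies $w_n\to\zeta$ and $|w_n-\zeta|=O(1-|w_n|)$). The function $q$: if $\overline E\cap\partial U=\emptyset$, $q\equiv1$; otherwise $q$ is holomorphic on $U$ with $0<|q|<1$ on $U$ and $\lim_{z\in E,|z|\to1}q(z)=0$, normalized so that $\sup_U|q|=1$. For $Z_n=(z_1,\dots,z_n)$: $B(Z_n,z)=\prod_{j=1}^n\frac{z-z_j}{1-\overline{z_j}z}$, $B_q(Z_n,z)=B(Z_n,z)q(z)$ (an empty product equals $1$), $Z_{j-1}=(z_1,\dots,z_{j-1})$. Define $V(Z_n)=\prod_{j=1}^n|B_q(Z_{j-1},z_j)|$, $M(Z_n)=\sup_{z\in E}|B_q(Z_n,z)|$, $V_n(E)=\sup_{Z_n\in E^n}V(Z_n)$ and $M_n(E)=\inf\{M(Z_n): Z_n\in E^n,\ V(Z_n)=V_n(E)\}$. *)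

(* Defs.v *)
From HB Require Import structures.
From mathcomp Require Import all_boot all_order all_algebra.
From mathcomp Require Import all_classical all_reals all_analysis.
From mathcomp.real_closed Require Import complex.

Set Implicit Arguments.
Unset Strict Implicit.
Unset Printing Implicit Defensive.

Import Order.TTheory GRing.Theory Num.Theory.
Local Open Scope classical_set_scope.
Local Open Scope ring_scope.

Section Defs.
Variable R : realType.
Local Notation C := R[i].

Definition cabs (z : C) : R := ComplexField.Normc.normc z.

Definition cconj (z : C) : C := conjc z.

Definition Udisc : set C := [set z | cabs z < 1].
Definition Ucircle : set C := [set z | cabs z = 1].

Definition expi (t : R) : C := Complex (cos t) (sin t).

(** A set of the unit circle has (arc-length) Lebesgue measure zero:
    its pull-back by t |-> e^{it}, t in [0, 2pi), is Lebesgue-negligible. *)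
Definition circle_null (A : set C) : Prop :=
  (@lebesgue_measure R).-negligible
    [set t : R | 0 <= t < pi *+ 2 /\ A (expi t)].

Definition nt_limit_point (E : set C) (zeta : C) : Prop :=
  Ucircle zeta /\
  exists w : nat -> C,
    (forall n, E (w n)) /\
    (forall eps : R, 0 < eps -> exists N : nat, forall n, (N <= n)%N ->
        cabs (w n - zeta) < eps) /\
    (exists K : R, exists N : nat, forall n, (N <= n)%N ->
        cabs (w n - zeta) <= K * (1 - cabs (w n))).

Definition nt_limit_points (E : set C) : set C := [set zeta | nt_limit_point E zeta].

Definition closure_meets_circle (E : set C) : Prop :=
  exists zeta : C, Ucircle zeta /\
    forall eps : R, 0 < eps -> exists z, E z /\ cabs (z - zeta) < eps.

Definition cdifferentiable_at (f : C -> C) (z0 : C) : Prop :=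
  exists L : C, forall eps : R, 0 < eps -> exists delta : R, 0 < delta /\
    forall w : C, 0 < cabs (w - z0) < delta ->
      cabs ((f w - f z0) / (w - z0) - L) < eps.

Definition holomorphic_on_U (f : C -> C) : Prop :=
  forall z, Udisc z -> cdifferentiable_at f z.

Definition admissible_q (E : set C) (q : C -> C) : Prop :=
  if `[< closure_meets_circle E >] then
    [/\ holomorphic_on_U q,
        (forall z, Udisc z -> 0 < cabs (q z) < 1),
        (forall eps : R, 0 < eps -> exists delta : R, 0 < delta /\
           forall z, E z -> 1 - delta < cabs z -> cabs (q z) < eps) &
        sup [set cabs (q z) | z in Udisc] = 1]
  else forall z, Udisc z -> q z = 1.

Definition Bl (Z : seq C) (z : C) : C :=
  \prod_(a <- Z) ((z - a) / (1 - cconj a * z)).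

Definition Bq (q : C -> C) (Z : seq C) (z : C) : C := Bl Z z * q z.

(** V(Z_n) = prod_{j=1}^n |B_q(Z_{j-1}, z_j)|  (Z_{j-1} = first j-1 points) *)
Definition Vt (q : C -> C) (Z : seq C) : R :=
  \prod_(j < size Z) cabs (Bq q (take j Z) (nth 0 Z j)).

Definition Mt (q : C -> C) (E : set C) (Z : seq C) : R :=
  sup [set cabs (Bq q Z z) | z in E].

Definition tuples_in (E : set C) (n : nat) : set (seq C) :=
  [set Z | size Z = n /\ forall z, z \in Z -> E z].

Definition Vn (q : C -> C) (E : set C) (n : nat) : R :=
  sup [set Vt q Z | Z in tuples_in E n].

Definition Mn (q : C -> C) (E : set C) (n : nat) : R :=
  inf [set Mt q E Z | Z in [set Z | tuples_in E n Z /\ Vt q Z = Vn q E n]].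

End Defs.

(* Main.v *)
Require Import Defs.
From HB Require Import structures.
From mathcomp Require Import all_boot all_order all_algebra.
From mathcomp Require Import all_classical all_reals all_analysis.
From mathcomp.real_closed Require Import complex.
From mathcomp Require Import ring lra zify.
Import Order.TTheory GRing.Theory Num.Theory.
Local Open Scope classical_set_scope.
Local Open Scope ring_scope.

Set Implicit Arguments. Unset Strict Implicit.

Section S.
Variable R : realType.
Local Notation C := R[i].

Lemma cabsE (x y : R) : cabs (Complex x y) = Num.sqrt (x ^+ 2 + y ^+ 2).
Proof. by []. Qed.

Lemma cabs_ge0 (z : C) : 0 <= cabs z.
Proof. by case: z => x y; rewrite cabsE sqrtr_ge0. Qed.

Lemma cabs_sq (z : C) : cabs z ^+ 2 = (complex.Re z) ^+ 2 + (complex.Im z) ^+ 2.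
Proof. by case: z => x y; rewrite cabsE sqr_sqrtr // addr_ge0 // sqr_ge0. Qed.

Lemma cabsM (x y : C) : cabs (x * y) = cabs x * cabs y.
Proof. exact: ComplexField.Normc.normcM. Qed.

Lemma cabsV (x : C) : cabs (x^-1) = (cabs x)^-1.
Proof. exact: ComplexField.Normc.normcV. Qed.

Lemma cabsD (x y : C) : cabs (x + y) <= cabs x + cabs y.
Proof. exact: (@le_normcD R x y). Qed.

Lemma cabsN (x : C) : cabs (- x) = cabs x.
Proof. exact: (@normcN R x). Qed.

Lemma cabs1 : cabs (1 : C) = 1.
Proof. exact: ComplexField.Normc.normc1. Qed.

Lemma cabs_eq0 (z : C) : cabs z = 0 -> z = 0.
Proof. exact: ComplexField.Normc.eq0_normc. Qed.

Lemma test (a z : C) : True.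
Proof.
case: a => a1 a2; case: z => z1 z2.
have e1 : (1 - cconj (Complex a1 a2) * Complex z1 z2) = Complex (1 - (a1*z1 + a2*z2)) (- (a1*z2 - a2*z1)).
  rewrite /cconj /conjc /=. apply/eqP; rewrite eq_complex /=. apply/andP; split; apply/eqP; ring.
have e2 : Complex z1 z2 - Complex a1 a2 = Complex (z1 - a1) (z2 - a2).
  by apply/eqP; rewrite eq_complex /= !eqxx.
done.
Qed.

Definition ps (a z : C) : R := cabs ((z - a) / (1 - cconj a * z)).

Lemma ps_coord (a1 a2 z1 z2 : R) :
  ps (Complex a1 a2) (Complex z1 z2) =
  cabs (Complex (z1 - a1) (z2 - a2)) / cabs (Complex (1 - (a1*z1 + a2*z2)) (- (a1*z2 - a2*z1))).
Proof.
have e1 : (1 - cconj (Complex a1 a2) * Complex z1 z2) = Complex (1 - (a1*z1 + a2*z2)) (- (a1*z2 - a2*z1)).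
  rewrite /cconj /conjc /=. apply/eqP; rewrite eq_complex /=. apply/andP; split; apply/eqP; ring.
have e2 : Complex z1 z2 - Complex a1 a2 = Complex (z1 - a1) (z2 - a2).
  by apply/eqP; rewrite eq_complex /= !eqxx.
by rewrite /ps e1 e2 cabsM cabsV.
Qed.

Lemma ps_ge0 a z : 0 <= ps a z.
Proof. exact: cabs_ge0. Qed.

Lemma ps_main (a z : C) (s : R) : cabs a ^+ 2 <= s -> cabs z ^+ 2 <= s -> s < 1 ->
  ps a z ^+ 2 <= 1 - (1 - s) ^+ 2 / 4.
Proof.
case: a => a1 a2; case: z => z1 z2 => hA hZ hs; rewrite !cabs_sq /= in hA hZ.
rewrite ps_coord expr_div_n !cabs_sq /=.
set N := (z1 - a1) ^+ 2 + (z2 - a2) ^+ 2.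
set D := (1 - (a1 * z1 + a2 * z2)) ^+ 2 + (- (a1 * z2 - a2 * z1)) ^+ 2.
set A := a1 ^+ 2 + a2 ^+ 2 in hA. set Z := z1 ^+ 2 + z2 ^+ 2 in hZ.
have hA0 : 0 <= A by rewrite /A addr_ge0 // sqr_ge0.
have hZ0 : 0 <= Z by rewrite /Z addr_ge0 // sqr_ge0.
have eDN : D - N = (1 - A) * (1 - Z) by rewrite /D /N /A /Z; ring.
set p := a1 * z1 + a2 * z2.
have eCS : A * Z - p ^+ 2 = (a1 * z2 - a2 * z1) ^+ 2 by rewrite /A /Z /p; ring.
have eD : D = 1 - 2 * p + A * Z by rewrite /D /p /A /Z; ring.
have hA1 : A <= 1 by lra.
have hZ1 : Z <= 1 by lra.
have hAZ : A * Z <= 1.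
  by have := ler_pM hA0 hZ0 hA1 hZ1; rewrite mulr1.
have hp : p ^+ 2 <= 1 by have := sqr_ge0 (a1 * z2 - a2 * z1); lra.
have hp1 : - 1 <= p <= 1 by apply/andP; split; nra.
have hD4 : D <= 4 by nra.
have h1 : (1 - s) ^+ 2 <= (1 - A) * (1 - Z) by nra.
have hN0 : 0 <= N by rewrite /N addr_ge0 // sqr_ge0.
have hs2 : 0 < (1 - s) ^+ 2 by rewrite exprn_gt0 // subr_gt0.
have hDp : 0 < D by lra.
rewrite ler_pdivrMr //.
have : D * (1 - s) ^+ 2 <= 4 * (1 - s) ^+ 2 by rewrite ler_pM2r.
lra.
Qed.
End S.


Section S2.
Variable R : realType.
Local Notation C := R[i].
Variable q : C -> C.

Lemma cabs_conj (z : C) : cabs (cconj z) = cabs z.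
Proof. by case: z => x y; rewrite /cconj /conjc !cabsE sqrrN. Qed.

Lemma ps_sym (a z : C) : ps a z = ps z a.
Proof.
rewrite /ps !cabsM !cabsV -cabsN opprB; congr (_ * _^-1).
rewrite -cabs_conj /cconj rmorphB rmorph1 rmorphM.
by rewrite /= conjcK mulrC.
Qed.

Lemma cabs_Bl (Z : seq C) z : cabs (Bl Z z) = \prod_(a <- Z) ps a z.
Proof.
rewrite /Bl (big_morph (@cabs R) (@cabsM R) (@cabs1 R)) //.
Qed.

Lemma cabs_Bq (Z : seq C) z : cabs (Bq q Z z) = (\prod_(a <- Z) ps a z) * cabs (q z).
Proof. by rewrite /Bq cabsM cabs_Bl. Qed.

Lemma Vt_nil : Vt q [::] = 1.
Proof. by rewrite /Vt big_ord0. Qed.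

Lemma Vt_rcons (Z : seq C) z : Vt q (rcons Z z) = Vt q Z * cabs (Bq q Z z).
Proof.
rewrite /Vt size_rcons big_ord_recr /=; congr (_ * _).
  apply: eq_bigr => i _ /=.
  by rewrite -cats1 take_cat (ltn_ord i) nth_cat (ltn_ord i).
by rewrite -cats1 take_size_cat // nth_cat ltnn subnn.
Qed.

Lemma Vt_ge0 Z : 0 <= Vt q Z.
Proof. by apply: prodr_ge0 => i _; apply: cabs_ge0. Qed.

Lemma Bl_perm (Z Z' : seq C) z : perm_eq Z Z' -> Bl Z z = Bl Z' z.
Proof. by move=> h; rewrite /Bl (perm_big _ h). Qed.

Lemma Vt_cat (P P' W : seq C) : perm_eq P P' -> Vt q P = Vt q P' ->
  Vt q (P ++ W) = Vt q (P' ++ W).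
Proof.
move=> hp hv; elim/last_ind: W => [|W w IH]; first by rewrite !cats0.
rewrite -!rcons_cat !Vt_rcons IH /Bq (@Bl_perm (P ++ W) (P' ++ W)) //.
by rewrite perm_cat2r.
Qed.

Lemma Vt_swap (X W : seq C) a b : Vt q (X ++ a :: b :: W) = Vt q (X ++ b :: a :: W).
Proof.
have e1 : X ++ a :: b :: W = rcons (rcons X a) b ++ W by rewrite -!cats1 -!catA.
have e2 : X ++ b :: a :: W = rcons (rcons X b) a ++ W by rewrite -!cats1 -!catA.
rewrite e1 e2; apply: Vt_cat.
  rewrite -!cats1 -!catA perm_cat2l.
  by rewrite perm_catC.
rewrite !Vt_rcons !cabs_Bq !big_rcons /= ps_sym; ring.
Qed.

Lemma Vt_move (X W : seq C) a : Vt q (X ++ a :: W) = Vt q (rcons (X ++ W) a).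
Proof.
elim: W X => [|b W IH] X; first by rewrite cats1 cats0.
rewrite Vt_swap.
have -> : X ++ b :: a :: W = rcons X b ++ a :: W by rewrite -cats1 -catA.
by rewrite IH cat_rcons.
Qed.

Lemma Vt_perm (Z Z' : seq C) : perm_eq Z Z' -> Vt q Z = Vt q Z'.
Proof.
elim/last_ind: Z Z' => [|Y a IH] Z' hp.
  by move: hp; rewrite perm_sym => /perm_nilP ->.
have ha : a \in Z' by rewrite -(perm_mem hp) mem_rcons mem_head.
move: hp; case/splitPr: ha => X1 X2 hp.
have hY : perm_eq Y (X1 ++ X2).
  rewrite -(perm_cons a); move: hp; rewrite perm_rcons => hp.
  apply: (perm_trans hp). by rewrite (perm_catCA X1 [:: a] X2).
rewrite Vt_move !Vt_rcons (IH (X1 ++ X2)) //.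
by rewrite /Bq (@Bl_perm Y (X1 ++ X2)).
Qed.

End S2.


Section S3.
Variable R : realType.
Local Notation C := R[i].

Lemma ps_le1 (a z : C) : Udisc a -> Udisc z -> ps a z <= 1.
Proof.
rewrite /Udisc /= => ha hz.
have h0 := cabs_ge0 a; have h1 := cabs_ge0 z.
set s := Num.max (cabs a ^+ 2) (cabs z ^+ 2).
have hs : s < 1 by rewrite /s gt_max; apply/andP; split; nra.
have := ps_main (s := s) (a := a) (z := z).
have ha2 : cabs a ^+ 2 <= s by rewrite /s le_max lexx.
have hz2 : cabs z ^+ 2 <= s by rewrite /s le_max lexx orbT.
move=> /(_ ha2 hz2 hs) h.
have := ps_ge0 a z; have : 0 <= (1 - s) ^+ 2 / 4 by rewrite divr_ge0 // sqr_ge0.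
move=> h2 h3; have h4 : ps a z ^+ 2 <= 1 by lra.
rewrite leNgt; apply/negP => h5.
have : 1 < ps a z ^+ 2 by rewrite expr2; have := ltr_pM ler01 ler01 h5 h5; rewrite mulr1.
lra.
Qed.

Lemma cabsB (x y : C) : cabs x - cabs y <= cabs (x - y).
Proof. have := cabsD (x - y) y; rewrite subrK; lra. Qed.

Lemma ps_gt0 (a z : C) : Udisc a -> Udisc z -> a != z -> 0 < ps a z.
Proof.
rewrite /Udisc /= => ha hz haz.
rewrite /ps cabsM cabsV; apply: divr_gt0.
  rewrite lt_neqAle cabs_ge0 andbT; apply/eqP => /esym /cabs_eq0 /eqP.
  by rewrite subr_eq0 eq_sym (negPf haz).
have := cabsB 1 (cconj a * z); rewrite cabs1 cabsM cabs_conj.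
have h0 := cabs_ge0 a; have h1 := cabs_ge0 z.
have : cabs a * cabs z < 1.
  by have := ler_pM h0 h1 (ltW ha) (ltW hz); rewrite mulr1; nra.
lra.
Qed.

Definition rho (d : R) : R := Num.sqrt (1 - (1 - (1 - d) ^+ 2) ^+ 2 / 4).

Lemma rho_ge0 d : 0 <= rho d. Proof. exact: sqrtr_ge0. Qed.

Lemma rho_lt1 d : 0 < d <= 1 -> rho d < 1.
Proof.
case/andP => d0 d1.
have hs : 0 <= (1 - d) ^+ 2 < 1 by rewrite sqr_ge0 /=; nra.
set c := 1 - (1 - (1 - d) ^+ 2) ^+ 2 / 4.
have hc : 0 <= c < 1.
  rewrite /c; set t := (1 - (1 - d) ^+ 2).
  have : 0 < t <= 1 by rewrite /t; lra.
  case/andP => t0 t1. have : 0 < t ^+ 2 <= 1 by rewrite exprn_gt0 //= exprn_ile1 // ltW.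
  lra.
have := sqr_sqrtr (proj1 (andP hc)); rewrite -/(rho d) => e.
have := rho_ge0 d; case/andP: hc => _ hc; nra.
Qed.

Lemma ps_inner (d : R) (a z : C) : 0 < d <= 1 -> cabs a <= 1 - d -> cabs z <= 1 - d ->
  ps a z <= rho d.
Proof.
case/andP => d0 d1 ha hz.
have h0 := cabs_ge0 a; have h1 := cabs_ge0 z.
have hs : (1 - d) ^+ 2 < 1 by nra.
have := ps_main (s := (1 - d) ^+ 2) (a := a) (z := z).
move=> /(_ _ _ hs) h; have {}h := h ltac:(nra) ltac:(nra).
rewrite /rho; have := ler_wsqrtr h; rewrite sqrtr_sqr ger0_norm //; exact: ps_ge0.
Qed.

Variables (E : set C) (q : C -> C).
Hypothesis hEU : E `<=` @Udisc R.
Hypothesis hq : forall z, E z -> 0 < cabs (q z) <= 1.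

Definition allE (Z : seq C) := forall z, z \in Z -> E z.

Lemma allE_rcons Z z : allE (rcons Z z) -> allE Z /\ E z.
Proof.
move=> h; split; first by move=> a ha; apply: h; rewrite mem_rcons in_cons ha orbT.
by apply: h; rewrite mem_rcons mem_head.
Qed.

Lemma prod_ps_le1 (Z : seq C) z : allE Z -> Udisc z -> \prod_(a <- Z) ps a z <= 1.
Proof.
move=> hZ hz; rewrite big_seq; apply: prodr_ile1 => a ha.
by rewrite ps_ge0 ps_le1 //; apply: hEU; apply: hZ.
Qed.

Lemma Bq_le1 (Z : seq C) z : allE Z -> E z -> cabs (Bq q Z z) <= 1.
Proof.
move=> hZ hz; rewrite cabs_Bq.
have h1 := prod_ps_le1 hZ (hEU hz).
have h0 : 0 <= \prod_(a <- Z) ps a z by apply: prodr_ge0 => a _; exact: ps_ge0.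
case/andP: (hq hz) => q0 q1.
by have := ler_pM h0 (ltW q0) h1 q1; rewrite mulr1.
Qed.

Lemma Vt_le1 (Z : seq C) : allE Z -> Vt q Z <= 1.
Proof.
elim/last_ind: Z => [|Z z IH] h; first by rewrite Vt_nil.
case: (allE_rcons h) => hZ hz; rewrite Vt_rcons.
by have := ler_pM (Vt_ge0 q Z) (cabs_ge0 _) (IH hZ) (Bq_le1 hZ hz); rewrite mulr1.
Qed.

Lemma Vt_gt0 (Z : seq C) : allE Z -> uniq Z -> 0 < Vt q Z.
Proof.
elim/last_ind: Z => [|Z z IH] h hu; first by rewrite Vt_nil.
case: (allE_rcons h) => hZ hz; rewrite Vt_rcons.
move: hu; rewrite rcons_uniq => /andP[hzZ hu].
apply: mulr_gt0; first exact: IH.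
rewrite cabs_Bq; apply: mulr_gt0; last by case/andP: (hq hz).
rewrite big_seq; apply: prodr_gt0 => a ha; apply: ps_gt0; try apply: hEU => //.
  exact: hZ.
by apply/eqP => e; move: hzZ; rewrite -e ha.
Qed.

End S3.


Section S4.
Variable R : realType.
Local Notation C := R[i].

Lemma bin2_mul k : (2 * 'C(k, 2) = k * k.-1)%N.
Proof.
elim: k => [|k IH] //; rewrite binS bin1 mulnDr IH.
case: k {IH} => //= k; lia.
Qed.

Lemma count_rcons' (T : Type) (p : pred T) s x : count p (rcons s x) = (count p s + p x)%N.
Proof. by rewrite -cats1 count_cat /= addn0. Qed.

Variables (E : set C) (q : C -> C).
Hypothesis hEU : E `<=` @Udisc R.
Hypothesis hq : forall z, E z -> 0 < cabs (q z) <= 1.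
Variables (d e2 : R).
Hypothesis hd : 0 < d <= 1.
Hypothesis he2 : 0 <= e2.
Hypothesis hout : forall z, E z -> 1 - d < cabs z -> cabs (q z) <= e2.

Definition inner : pred C := fun z => cabs z <= 1 - d.

Lemma prod_inner (Z : seq C) z : allE E Z -> inner z ->
  \prod_(a <- Z) ps a z <= rho d ^+ count inner Z.
Proof.
elim: Z => [|a Z IH] hZ hz; first by rewrite big_nil.
have hZ' : allE E Z by move=> b hb; apply: hZ; rewrite in_cons hb orbT.
have ha : E a by apply: hZ; rewrite mem_head.
have -> : count inner (a :: Z) = (inner a + count inner Z)%N by [].
rewrite big_cons exprD.
have h0 : 0 <= \prod_(b <- Z) ps b z by apply: prodr_ge0 => b _; exact: ps_ge0.
have hi := IH hZ' hz.
have hzU : Udisc z by move: hz; rewrite /inner /Udisc /= => hz; case/andP: hd => d0 _; lra.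
case hia: (inner a).
  rewrite expr1; apply: ler_pM => //; first exact: ps_ge0.
  exact: ps_inner.
rewrite expr0; have := ler_pM (ps_ge0 a z) h0 (ps_le1 (hEU ha) hzU) hi.
by rewrite !mul1r.
Qed.


Lemma Vt_bound (Z : seq C) : allE E Z ->
  Vt q Z <= e2 ^+ count (predC inner) Z * rho d ^+ 'C(count inner Z, 2).
Proof.
elim/last_ind: Z => [|Z z IH] h; first by rewrite Vt_nil /= !expr0 mulr1.
case: (allE_rcons h) => hZ hz.
rewrite Vt_rcons !count_rcons' cabs_Bq.
have hB := IH hZ.
have h0 : 0 <= \prod_(b <- Z) ps b z by apply: prodr_ge0 => b _; exact: ps_ge0.
case/andP: (hq hz) => q0 q1.
have hqq : 0 <= \prod_(a <- Z) ps a z * cabs (q z) by rewrite mulr_ge0 // ltW.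
case hi: (inner z); rewrite /= ?hi /=.
  have hb2 : \prod_(a <- Z) ps a z * cabs (q z) <= rho d ^+ count inner Z.
    by have := ler_pM h0 (ltW q0) (prod_inner hZ hi) q1; rewrite mulr1.
  apply: le_trans (ler_pM (Vt_ge0 _ _) hqq hB hb2) _.
  by rewrite addn0 addn1 binS bin1 exprD mulrA.
have hb2 : \prod_(a <- Z) ps a z * cabs (q z) <= e2.
  have hzU := hEU hz.
  have := ler_pM h0 (ltW q0) (prod_ps_le1 hEU hZ hzU) (hout hz _).
  rewrite mul1r; apply.
  by move: hi; rewrite /inner => /negbT; rewrite -ltNge.
apply: le_trans (ler_pM (Vt_ge0 _ _) hqq hB hb2) _.
by rewrite addn1 addn0 exprSr [X in _ <= X]mulrAC.
Qed.


Lemma M_local (Z : seq C) z a : allE E Z -> 0 < Vt q Z ->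
  (forall Z', size Z' = size Z -> allE E Z' -> Vt q Z' <= Vt q Z) -> E z -> a \in Z ->
  cabs (Bq q Z z) <= cabs (Bq q (rem a Z) a).
Proof.
move=> hZ hV hmax hz ha.
set Y := rem a Z.
have hp : perm_eq Z (rcons Y a) by rewrite perm_sym perm_rcons perm_sym; exact: perm_to_rem.
have hY : allE E Y by move=> b hb; apply: hZ; exact: (mem_rem hb).
have e1 : Vt q Z = Vt q Y * cabs (Bq q Y a) by rewrite (Vt_perm q hp) Vt_rcons.
have hY0 : 0 < Vt q Y.
  move: hV; rewrite e1 => hV; rewrite lt_neqAle Vt_ge0 andbT; apply/eqP => e.
  by move: hV; rewrite -e mul0r ltxx.
have hle : Vt q (rcons Y z) <= Vt q Z.
  apply: hmax; first by rewrite size_rcons size_rem // prednK // lt0n size_eq0; apply/eqP => e; move: ha; rewrite e.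
  move=> b; rewrite mem_rcons in_cons => /orP[/eqP -> //|hb]; exact: hY.
have h2 : cabs (Bq q Y z) <= cabs (Bq q Y a).
  by move: hle; rewrite Vt_rcons e1 ler_pM2l.
apply: le_trans h2.
have -> : cabs (Bq q Z z) = cabs (Bq q (rcons Y a) z) by rewrite /Bq (Bl_perm z hp).
rewrite !cabs_Bq big_rcons /=.
have h0 : 0 <= \prod_(b <- Y) ps b z by apply: prodr_ge0 => b _; exact: ps_ge0.
apply: ler_pM => //; first by rewrite mulr_ge0 // ps_ge0.
  exact: cabs_ge0.
rewrite -[X in _ <= X]mulr1; apply: ler_pM => //; first exact: ps_ge0.
apply: ps_le1; apply: hEU => //; exact: hZ.
Qed.

Lemma M_bound (n : nat) (Z : seq C) z : allE E Z -> size Z = n.+1 -> 0 < Vt q Z ->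
  (forall Z', size Z' = size Z -> allE E Z' -> Vt q Z' <= Vt q Z) -> E z ->
  cabs (Bq q Z z) <= Num.max e2 (rho d ^+ n).
Proof.
move=> hZ hs hV hmax hz.
have [/hasP [a ha hia]|hall] := boolP (has (predC inner) Z).
  apply: le_trans (M_local hZ hV hmax hz ha) _.
  rewrite le_max; apply/orP; left.
  have hY : allE E (rem a Z) by move=> b hb; apply: hZ; exact: (mem_rem hb).
  have haE : E a := hZ _ ha.
  rewrite cabs_Bq -[X in _ <= X]mul1r; apply: ler_pM.
  - by apply: prodr_ge0 => b _; exact: ps_ge0.
  - exact: cabs_ge0.
  - by apply: (prod_ps_le1 hEU hY); apply: hEU.
  - by apply: hout => //; move: hia => /=; rewrite /inner -ltNge.
case: Z hs hZ hV hmax hall => // a Y [hs] hZ hV hmax hall.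
have ha : a \in a :: Y by rewrite mem_head.
apply: le_trans (M_local hZ hV hmax hz ha) _.
rewrite le_max; apply/orP; right.
rewrite /= eqxx.
have hY : allE E Y by move=> b hb; apply: hZ; rewrite in_cons hb orbT.
have haE : E a := hZ _ ha.
move: hall; rewrite has_predC negbK /= => /andP[hia hallY].
have hc : count inner Y = n by rewrite -hs; apply/eqP; rewrite -all_count.
case/andP: (hq haE) => q0 q1.
rewrite cabs_Bq -[X in _ <= X]mulr1; apply: ler_pM => //.
- by apply: prodr_ge0 => b _; exact: ps_ge0.
- exact: cabs_ge0.
- by rewrite -hc; apply: prod_inner.
Qed.


End S4.


Section S5.
Variable R : realType.
Local Notation C := R[i].

Lemma pow_small (r x : R) : 0 <= r < 1 -> 0 < x -> exists m, forall n, (m <= n)%N -> r ^+ n <= x.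
Proof.
case/andP => r0 r1 hx.
have hr : `|r| < 1 by rewrite ger0_norm.
have := cvg_expr hr; rewrite cvgrPdist_le => /(_ x hx) [m _ hm].
exists m => n hn; have := hm n hn; rewrite sub0r normrN ger0_norm //.
exact: exprn_ge0.
Qed.

Lemma numeric_V (e r : R) : 0 < e <= 1 -> 0 <= r < 1 ->
  exists N, forall n o k, (N <= n)%N -> (o + k = n)%N ->
    (e ^+ 2) ^+ o * r ^+ 'C(k, 2) <= e ^+ n.
Proof.
case/andP => e0 e1 /andP[r0 r1].
have e20 : 0 < e ^+ 2 by rewrite exprn_gt0.
have hr : 0 <= r < 1 by rewrite r0 r1.
have [m hm] := pow_small hr e20.
exists (4 * m + 2)%N => n o k hn hok.
have ee : forall j, (e ^+ 2) ^+ j = e ^+ (2 * j) by move=> j; rewrite exprM.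
have eb1 : forall j, (e ^+ 2) ^+ j <= 1.
  move=> j; apply: exprn_ile1; first exact: ltW.
  by rewrite expr2 mulr_ile1 // ltW.
have rb1 : forall j, r ^+ j <= 1 by move=> j; apply: exprn_ile1 => //; exact: ltW.
have e0' : 0 <= e by rewrite ltW.
case: (leqP (2 * k) n) => hk.
  rewrite -[X in _ <= X]mulr1; apply: ler_pM => //; try by rewrite exprn_ge0 // ?exprn_ge0.
  by rewrite ee; apply: ler_wiXn2l => //; lia.
rewrite -[X in _ <= X]mul1r; apply: ler_pM => //; try by rewrite exprn_ge0 // ?exprn_ge0.
have hC : (m * k <= 'C(k, 2))%N.
  have := bin2_mul k; nia.
apply: le_trans (ler_wiXn2l r0 (ltW r1) hC) _.
rewrite exprM.
apply: le_trans (_ : (e ^+ 2) ^+ k <= _).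
  have := @lerXn2r _ k (r ^+ m) (e ^+ 2); apply; [by rewrite nnegrE exprn_ge0 | by rewrite nnegrE exprn_ge0 | exact: hm].
by rewrite ee; apply: ler_wiXn2l => //; lia.
Qed.



Lemma tuples_exist (E : set C) : infinite_set E -> forall n, exists Z : seq C,
  tuples_in E n Z /\ uniq Z.
Proof.
move=> hinf; elim => [|n [Z [[hs hZ] hu]]]; first by exists [::]; split => //; split.
have [[z [hz hzZ]]|hno] := pselect (exists z, E z /\ z \notin Z).
  exists (z :: Z); split; last by rewrite /= hzZ hu.
  split; first by rewrite /= hs.
  by move=> b; rewrite in_cons => /orP[/eqP -> //|]; apply: hZ.
exfalso; apply: hinf; apply: (sub_finite_set _ (finite_seq Z)) => z hz /=.
by apply/negPn/negP => hn; apply: hno; exists z.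
Qed.

Variables (E : set C) (q : C -> C).
Hypothesis hEU : E `<=` @Udisc R.
Hypothesis hq : forall z, E z -> 0 < cabs (q z) <= 1.
Hypothesis hinf : infinite_set E.
Hypothesis hOut : forall eps : R, 0 < eps -> exists d : R, 0 < d <= 1 /\
  forall z, E z -> 1 - d < cabs z -> cabs (q z) <= eps.

Lemma Vn_ub n : has_ubound [set Vt q Z | Z in tuples_in E n].
Proof. by exists 1 => x [Z [_ hZ] <-]; apply: (Vt_le1 hEU hq). Qed.

Lemma Vt_le_Vn n Z : tuples_in E n Z -> Vt q Z <= Vn q E n.
Proof. by move=> h; apply: (ub_le_sup (Vn_ub n)); exists Z. Qed.

Lemma Vn_gt0 n : 0 < Vn q E n.
Proof.
have [Z [hZ hu]] := tuples_exist hinf n.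
apply: lt_le_trans (Vt_le_Vn hZ); apply: (Vt_gt0 hEU hq) => //; by case: hZ.
Qed.

Lemma V_part : (fun n : nat => Vn q E n `^ (n%:R)^-1) @ \oo --> 0.
Proof.
apply/cvgrPdist_le => eps heps.
set e := Num.min eps 1.
have he : 0 < e <= 1 by rewrite /e lt_min heps ltr01 /= ge_min lexx orbT.
case/andP: he => e0 e1.
have [d [hd hd2]] := hOut (exprn_gt0 2 e0).
have hr : 0 <= rho d < 1 by rewrite rho_ge0 rho_lt1.
have he' : 0 < e <= 1 by rewrite e0 e1.
have [N hN] := numeric_V he' hr.
exists N.+1 => // n /= hn.
rewrite sub0r normrN ger0_norm ?powR_ge0 //.
apply: (@le_trans _ _ e); last by rewrite /e ge_min lexx.
have hVn : Vn q E n <= e ^+ n.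
  apply: ge_sup; first by have [Z [hZ _]] := tuples_exist hinf n; exists (Vt q Z), Z.
  move=> x [Z [hs hZ] <-].
  apply: le_trans (Vt_bound hEU hq hd hd2 hZ) _ .
  apply: hN; first by apply: leq_trans hn; exact: leqnSn.
  by rewrite addnC count_predC.
have n0 : (0 < n)%N by apply: leq_trans hn.
have h1 : Vn q E n `^ (n%:R)^-1 <= (e ^+ n) `^ (n%:R)^-1.
  apply: ge0_ler_powR; [by rewrite invr_ge0 ler0n | by rewrite nnegrE; exact: ltW (Vn_gt0 n) | by rewrite nnegrE exprn_ge0 // ltW | exact: hVn].
apply: le_trans h1 _.
rewrite -powR_mulrn; last exact: ltW e0.
rewrite -powRrM mulfV; last by rewrite pnatr_eq0 -lt0n.
by rewrite powRr1 // ltW.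
Qed.


Lemma Mt_ge0 Z : allE E Z -> 0 <= Mt q E Z.
Proof.
move=> hZ.
have [z hz] : E !=set0 by apply/set0P/negP => /eqP e; apply: hinf; rewrite e.
have hub : has_ubound [set cabs (Bq q Z z) | z in E].
  by exists 1 => x [w hw <-]; apply: (Bq_le1 hEU hq).
apply: le_trans (cabs_ge0 (Bq q Z z)) _.
by apply: (ub_le_sup hub); exists z.
Qed.

Lemma M_part : (fun n : nat => Mn q E n) @ \oo --> 0.
Proof.
apply/cvgrPdist_le => eps heps.
set e := Num.min eps 1.
have he : 0 < e <= 1 by rewrite /e lt_min heps ltr01 /= ge_min lexx orbT.
case/andP: he => e0 e1.
have [d [hd hd2]] := hOut e0.
have hr : 0 <= rho d < 1 by rewrite rho_ge0 rho_lt1.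
have [m hm] := pow_small hr e0.
exists m.+1 => // n /= hn.
rewrite sub0r normrN.
set T := [set Mt q E Z | Z in [set Z | tuples_in E n Z /\ Vt q Z = Vn q E n]].
have [[x [Z [[hs hZ] hV] hx]]|hT] := pselect (T !=set0); last first.
  rewrite /Mn -/T.
  have -> : T = set0 by apply/seteqP; split => // x Tx; apply: hT; exists x.
  by rewrite inf0 normr0 ltW.
have hlb : lbound T 0 by move=> y [Z' [[_ hZ'] _] <-]; exact: Mt_ge0.
have hMn0 : 0 <= Mn q E n by apply: lb_le_inf => //; exists x, Z.
rewrite ger0_norm //.
have hMZ : Mn q E n <= Mt q E Z by apply: (ge_inf (ex_intro _ 0 hlb)); exists Z.
apply: le_trans hMZ _; apply: (@le_trans _ _ e); last by rewrite /e ge_min lexx.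
clear hlb hMn0; clear T; case: n hn hs hV => // n hn hs hV.
apply: ge_sup.
  have [z hz] : E !=set0 by apply/set0P/negP => /eqP e'; apply: hinf; rewrite e'.
  by exists (cabs (Bq q Z z)), z.
move=> y [z hz <-].
apply: le_trans (M_bound hEU hq hd hd2 hZ hs _ _ hz) _.
- by rewrite hV; exact: Vn_gt0.
- move=> Z' hs' hZ'; rewrite hV; apply: Vt_le_Vn; split => //; by rewrite hs' hs.
- by rewrite ge_max lexx /=; apply: hm.
Qed.

End S5.
Module BA.
Import numFieldNormedType.Exports.


Section S6.
Variable R : realType.
Local Notation C := R[i].

Lemma cabs_ReIm (z : C) (a b : R) :
  cabs (z - Complex a b) <= `|complex.Re z - a| + `|complex.Im z - b|.
Proof.
case: z => x y.
have -> : Complex x y - Complex a b = Complex (x - a) 0 + Complex 0 (y - b).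
  by apply/eqP; rewrite eq_complex /= !addr0 add0r !eqxx.
apply: le_trans (cabsD _ _) _.
by rewrite !cabsE expr0n /= addr0 add0r !sqrtr_sqr.
Qed.

Lemma Re_le (z : C) : `|complex.Re z| <= cabs z.
Proof.
case: z => x y; rewrite cabsE /= -sqrtr_sqr; apply: ler_wsqrtr.
by rewrite lerDl sqr_ge0.
Qed.

Lemma Im_le (z : C) : `|complex.Im z| <= cabs z.
Proof.
case: z => x y; rewrite cabsE /= -sqrtr_sqr; apply: ler_wsqrtr.
by rewrite lerDr sqr_ge0.
Qed.

Lemma incr_ge (f : nat -> nat) : increasing_seq f -> forall n, (n <= f n)%N.
Proof.
move=> hf; elim => // n IH.
have := hf n.+1 n; rewrite ltnn leEnat => /negbT; rewrite -ltnNge.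
lia.
Qed.


Lemma cvg_eps (u : nat -> R) : cvgn u -> exists a, forall eps, 0 < eps ->
  exists N, forall n, (N <= n)%N -> `|a - u n| <= eps.
Proof.
move=> /cvg_ex [a ha]; exists a => eps heps.
by move: ha => /cvgrPdist_le /(_ eps heps) [N _ hN]; exists N.
Qed.

Lemma bounded_away (E : set C) : E `<=` @Udisc R -> ~ closure_meets_circle E ->
  exists r : R, r < 1 /\ forall z, E z -> cabs z <= r.
Proof.
move=> hEU hnc; apply: contrapT => hno; apply: hnc.
have hw : forall n : nat, exists z, E z /\ 1 - (n.+1%:R)^-1 < cabs z.
  move=> n; apply: contrapT => hn; apply: hno; exists (1 - (n.+1%:R)^-1); split.
    by rewrite gtrBl invr_gt0 ltr0Sn.
  by move=> z hz; rewrite leNgt; apply/negP => hlt; apply: hn; exists z.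
have [w hw'] := choice hw.
have hw1 : forall n, cabs (w n) < 1 by move=> n; apply: hEU; case: (hw' n).
set u := fun n => complex.Re (w n).
have bu : bounded_fun u.
  exists 1; split => // M hM x _ /=.
  by apply: le_trans (Re_le _) _; apply: le_trans (ltW (hw1 x)) (ltW hM).
have [f hf cu] := bolzano_weierstrass bu.
set v := fun n => complex.Im (w (f n)).
have bv : bounded_fun v.
  exists 1; split => // M hM x _ /=.
  by apply: le_trans (Im_le _) _; apply: le_trans (ltW (hw1 _)) (ltW hM).
have [g hg cv] := bolzano_weierstrass bv.
have [a ha] := cvg_eps cu.
have [b hb] := cvg_eps cv.
set zeta : C := Complex a b.
have happ : forall eps, 0 < eps -> forall K : nat, exists n, (K <= n)%N /\
    cabs (w (f (g n)) - zeta) <= eps.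
  move=> eps heps K.
  have heps2 : 0 < eps / 2 by rewrite divr_gt0.
  have [N1 h1] := ha _ heps2; have [N2 h2] := hb _ heps2.
  exists (maxn K (maxn N1 N2)); split; first by rewrite leq_maxl.
  apply: le_trans (cabs_ReIm _ a b) _.
  have hg1 := incr_ge hg (maxn K (maxn N1 N2)).
  have := h1 (g (maxn K (maxn N1 N2))) ltac:(lia).
  have := h2 (maxn K (maxn N1 N2)) ltac:(lia).
  move=> H2 H1; rewrite [eps]splitr; apply: lerD; rewrite distrC; [exact: H1 | exact: H2].
have hE : forall n, E (w n) by move=> n; case: (hw' n).
have hlow : forall n, 1 - (n.+1%:R)^-1 < cabs (w n) by move=> n; case: (hw' n).
exists zeta; split; last first.
  move=> eps heps.
  have heps2 : 0 < eps / 2 by rewrite divr_gt0.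
  have [n [_ h]] := happ _ heps2 0%N.
  exists (w (f (g n))); split => //.
  by apply: le_lt_trans h _; rewrite ltr_pdivrMr // ltr_pMr // ltr1n.
rewrite /Ucircle /=; apply/eqP; rewrite eq_le; apply/andP; split.
  apply/ler_addgt0Pr => e he.
  have [n [_ h]] := happ _ he 0%N.
  have := cabsD (zeta - w (f (g n))) (w (f (g n))); rewrite subrK.
  have := hw1 (f (g n)).
  rewrite -cabsN opprB in h.
  move=> h1 h2; apply: le_trans h2 _; rewrite addrC; apply: lerD => //; exact: ltW.
apply/ler_addgt0Pr => e he.
have he2 : 0 < e / 2 by rewrite divr_gt0.
have [K _ hK] := near_infty_natSinv_lt (PosNum he2).
have [n [hn h]] := happ _ he2 K.
have hfg : (K <= f (g n))%N.
  by have := incr_ge hg n; have := incr_ge hf (g n); lia.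
have hk := hK _ hfg; rewrite /= in hk.
have hl := hlow (f (g n)).
have := cabsB (w (f (g n))) (w (f (g n)) - zeta).
have -> : w (f (g n)) - (w (f (g n)) - zeta) = zeta by ring.
move=> h3.
have : 1 - e / 2 - e / 2 <= cabs zeta.
  apply: le_trans h3; apply: lerB => //; apply: ltW; apply: lt_trans hl.
  by rewrite ltrD2l ltrN2.
by rewrite -addrA -opprD -splitr lerBlDr.
Qed.

End S6.
End BA.

Unset Implicit Arguments.

Theorem proposition3p7 (R : realType) (E : set R[i]) (q : R[i] -> R[i]) :
  E `<=` @Udisc R ->
  infinite_set E ->
  circle_null (nt_limit_points E) ->
  admissible_q E q ->
  ((fun n : nat => Vn q E n `^ (n%:R)^-1) @ \oo --> 0) /\
  ((fun n : nat => Mn q E n) @ \oo --> 0).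
Proof.
move=> hEU hinf _ hadm.
suff [hq hOut] : (forall z, E z -> 0 < cabs (q z) <= 1) /\
  (forall eps : R, 0 < eps -> exists d : R, 0 < d <= 1 /\
    forall z, E z -> 1 - d < cabs z -> cabs (q z) <= eps).
  split; [exact: (V_part hEU hq hinf hOut) | exact: (M_part hEU hq hinf hOut)].
move: hadm; rewrite /admissible_q; case: asboolP => hc.
  case=> _ hU heps _; split.
    by move=> z hz; case/andP: (hU z (hEU z hz)) => h1 h2; rewrite h1 ltW.
  move=> eps he; have [del [hdel h]] := heps eps he.
  exists (Num.min del 1); split; first by rewrite lt_min hdel ltr01 ge_min lexx orbT.
  move=> z hz hlt; apply: ltW; apply: h => //; apply: le_lt_trans hlt.
  by rewrite lerD2l lerN2 ge_min lexx.
move=> hq1.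
have [r [hr hrz]] := BA.bounded_away hEU hc.
split.
  by move=> z hz; rewrite hq1 ?cabs1 ?ltr01 ?lexx //; apply: hEU.
move=> eps he; exists (1 - Num.max r 0); split.
  by rewrite subr_gt0 gt_max hr ltr01 /= lerBlDr lerDl le_max lexx orbT.
move=> z hz; rewrite opprB addrC subrK => hlt; exfalso.
have := hrz z hz; rewrite leNgt; move/negP; apply.
by apply: le_lt_trans hlt; rewrite le_max lexx.
Qed.
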